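(* For the odd-cycle index coding problem, $\limsup_{\epsilon\to0}R^m_{lb}(\mathbf{0}+\epsilon\mathbf{1})<\frac m2$.
   Context: Odd-cycle index coding problem: $m\ge5$ odd; source $\mathbf{X}=(X_1,\dots,X_m)$ of i.i.d. Bernoulli$(1/2)$ bits; decoder $i\in[m]$ has side information $\mathbf{Y_i}=(X_{i-1},X_{i+1})$ (indices mod $m$, taken in $[m]$) and wants $X_i$; it is cast as a rate-distortion problem with distortion $d_i(\mathbf{x},\hat x_i)=\mathbf{1}\{\hat x_i\ne x_i\}$ and target $D_i=0$; rates in bits. $R^m_{lb}(\mathbf{D}+\epsilon\mathbf{1})=\sup_{\bar P}\inf_{\bar C}\bar R_{lb}-\epsilon$, where $\bar R_{lb}=\max_\sigma[I(\mathbf{X};V,U_{Y_{\sigma(1)}}|\mathbf{Y}_{\sigma(1)})+\sum_{k=2}^mI(\mathbf{X};U_{Y_{\sigma(k)}}|V,U_{Y_{\sigma(1)}},\dots,U_{Y_{\sigma(k-1)}},\mathbf{Y}_{\sigma(1)},\dots,\mathbf{Y}_{\sigma(k)})]$ over permutations $\sigma$ of $[m]$; $\bar P$ is the set of joint laws of $(\mathbf{X},\mathbf{Y_1},\dots,\mathbf{Y_m})$ with the given pairwise marginals of $(\mathbf{X},\mathbf{Y_i})$; $\bar C$ is the set of $(V,U_{Y_1},\dots,U_{Y_m})$ with $(\mathbf{Y_1},\dots,\mathbf{Y_m})\leftrightarrow\mathbf{X}\leftrightarrow(V,U_{Y_1},\dots,U_{Y_m})$ and functions $g_i$ with $E[d_i(\mathbf{X},g_i(V,U_{Y_i},\mathbf{Y_i}))]\le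 D_i+\epsilon$. *)

(* Defs.v *)
From Stdlib Require Import Reals.
From mathcomp Require Import all_fingroup.
From mathcomp Require Import all_boot.
Set Implicit Arguments.
Unset Strict Implicit.
Unset Printing Implicit Defensive.
Local Open Scope R_scope.

Definition rsum (T : finType) (F : T -> R) : R := \big[Rplus/R0]_(t : T) F t.
Definition rsumP (T : finType) (P : pred T) (F : T -> R) : R :=
  \big[Rplus/R0]_(t : T | P t) F t.

(* logarithm in base 2 (rates in bits); ln x = 0 for x <= 0 in Stdlib, so
   0 * log2 0 = 0 as usual *)
Definition log2 (x : R) : R := (ln x / ln 2).

Definition is_pmf (T : finType) (p : T -> R) : Prop :=
  (forall t, 0 <= p t) /\ rsum p = 1.

Definition dist_of (Om : finType) (p : Om -> R) (A : finType) (f : Om -> A) (a : A) : R :=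
  rsumP (fun w => f w == a) p.

Definition entropy (Om : finType) (p : Om -> R) (A : finType) (f : Om -> A) : R :=
  (- rsum (fun a : A => dist_of p f a * log2 (dist_of p f a))).

Definition cond_mi (Om : finType) (p : Om -> R) (A B C : finType)
  (fa : Om -> A) (fb : Om -> B) (fc : Om -> C) : R :=
  (entropy p (fun w => (fa w, fc w)) + entropy p (fun w => (fb w, fc w))
   - entropy p (fun w => (fa w, fb w, fc w)) - entropy p fc).

Lemma ord_pos (m : nat) (i : 'I_m) : (0 < m)%N.
Proof. exact: (leq_ltn_trans (leq0n i) (ltn_ord i)). Qed.

Definition cyc_add (m : nat) (i : 'I_m) (d : nat) : 'I_m :=
  Ordinal (ltn_pmod (i + d)%N (ord_pos i)).
Definition prev (m : nat) (i : 'I_m) : 'I_m := cyc_add i (m - 1)%N.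
Definition next (m : nat) (i : 'I_m) : 'I_m := cyc_add i 1.

(* source X = (X_1..X_m); side informations Y_i = (X_{i-1}, X_{i+1}) *)
Notation Xs m := {ffun 'I_m -> bool}.
Notation Ys m := {ffun 'I_m -> (bool * bool)%type}.
Notation Us m TU := {ffun 'I_m -> TU}.
(* sample space of (X, Y_1..Y_m, V, U_{Y_1}..U_{Y_m}) *)
Notation Omega m TV TU := ((Xs m * Ys m) * (TV * Us m TU))%type.

(* P-bar: joint laws of (X, Y_1..Y_m) whose (X, Y_i) marginals are the given
   ones: X uniform on {0,1}^m and Y_i = (X_{i-1}, X_{i+1}). *)
Definition in_Pbar (m : nat) (P : Xs m * Ys m -> R) : Prop :=
  is_pmf P /\
  forall (i : 'I_m) (x : Xs m) (yi : bool * bool),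
    rsumP (fun xy : Xs m * Ys m => (xy.1 == x) && (xy.2 i == yi)) P =
    (if yi == (x (prev i), x (next i)) then / (2 ^ m) else 0).

(* Joint law of (X, Y, V, U) when (Y) <-> X <-> (V, U): p = P(x,y) Q(v,u | x) *)
Definition joint (m : nat) (TV TU : finType) (P : Xs m * Ys m -> R)
  (Q : Xs m -> TV * Us m TU -> R) (w : Omega m TV TU) : R :=
  (P w.1 * Q w.1.1 w.2).

(* C-bar(eps): test channels Q (realising the Markov chain) and decoders g_i
   with E[ d_i(X, g_i(V, U_{Y_i}, Y_i)) ] <= D_i + eps, where D_i = 0 and
   d_i is the Hamming distortion on X_i. *)
Definition in_Cbar (m : nat) (TV TU : finType) (P : Xs m * Ys m -> R) (eps : R)
  (Q : Xs m -> TV * Us m TU -> R) (g : 'I_m -> TV -> TU -> bool * bool -> bool) : Prop :=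
  (forall x, is_pmf (Q x)) /\
  forall i : 'I_m,
    (rsum (fun w : Omega m TV TU =>
       joint P Q w * (if g i w.2.1 (w.2.2 i) (w.1.2 i) != w.1.1 i then 1 else 0))
     <= 0 + eps).

(* k-th summand (k = 0 is the first one) of the bound for permutation s *)
Definition Rlb_term (m : nat) (TV TU : finType) (P : Xs m * Ys m -> R)
  (Q : Xs m -> TV * Us m TU -> R) (s : {perm 'I_m}) (k : 'I_m) : R :=
  let p := joint P Q in
  if (val k == 0)%N then
    cond_mi p (fun w : Omega m TV TU => w.1.1)
              (fun w => (w.2.1, w.2.2 (s k)))
              (fun w => w.1.2 (s k))
  else
    cond_mi p (fun w : Omega m TV TU => w.1.1)
              (fun w => w.2.2 (s k))
              (fun w => (w.2.1,
                         [ffun j : 'I_m => if (j < k)%N then Some (w.2.2 (s j)) else None],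
                         [ffun j : 'I_m => if (j <= k)%N then Some (w.1.2 (s j)) else None])).

(* R-bar_lb: maximum over permutations s of [m] (all sums are >= 0, so the
   max with initial value 0 is the max over the nonempty set of permutations) *)
Definition Rbar_lb (m : nat) (TV TU : finType) (P : Xs m * Ys m -> R)
  (Q : Xs m -> TV * Us m TU -> R) : R :=
  \big[Rmax/R0]_(s : {perm 'I_m}) rsum (fun k : 'I_m => Rlb_term P Q s k).

(* R^m_lb(0 + eps 1) <= c, i.e.  sup_{P in Pbar} inf_{C in Cbar} Rbar_lb - eps <= c *)
Definition Rlb_le (m : nat) (eps c : R) : Prop :=
  forall P : Xs m * Ys m -> R, in_Pbar P ->
  forall eta : R, (0 < eta) ->
  exists (TV TU : finType) (Q : Xs m -> TV * Us m TU -> R)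
         (g : 'I_m -> TV -> TU -> bool * bool -> bool),
    in_Cbar P eps Q g /\ (Rbar_lb P Q - eps <= c + eta).

(* Main.v *)
Require Import Defs.
From Stdlib Require Import Reals Lra.
From HB Require Import structures.
From mathcomp Require Import all_fingroup.
From mathcomp Require Import all_boot.
Set Implicit Arguments.
Unset Strict Implicit.
Unset Printing Implicit Defensive.
Local Open Scope R_scope.

Lemma Rpa : associative Rplus. Proof. move=> *; rewrite Rplus_assoc //. Qed.
Lemma Rpc : commutative Rplus. Proof. move=> *; apply Rplus_comm. Qed.
Lemma Rp0 : left_id R0 Rplus. Proof. move=> *; apply Rplus_0_l. Qed.
HB.instance Definition _ := Monoid.isComLaw.Build R R0 Rplus Rpa Rpc Rp0.
Lemma Rm0l : left_zero R0 Rmult. Proof. move=> *; apply Rmult_0_l. Qed.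
Lemma Rm0r : right_zero R0 Rmult. Proof. move=> *; apply Rmult_0_r. Qed.
HB.instance Definition _ := Monoid.isMulLaw.Build R R0 Rmult Rm0l Rm0r.
Lemma Rdl : left_distributive Rmult Rplus. Proof. move=> *; apply Rmult_plus_distr_r. Qed.
Lemma Rdr : right_distributive Rmult Rplus. Proof. move=> *; apply Rmult_plus_distr_l. Qed.
HB.instance Definition _ := Monoid.isAddLaw.Build R Rmult Rplus Rdl Rdr.

Section Sums.
Variable T : finType.

Lemma rsum_le (F G : T -> R) : (forall t, F t <= G t) -> rsum F <= rsum G.
Proof.
move=> H; rewrite /rsum; apply: (big_ind2 (fun x y => x <= y)) => //.
- lra.
- move=> *; lra.
Qed.

Lemma rsum_ge0 (F : T -> R) : (forall t, 0 <= F t) -> 0 <= rsum F.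
Proof.
move=> H; rewrite /rsum; apply: (big_ind (fun x => 0 <= x)) => //.
- lra.
- move=> *; lra.
Qed.

Lemma rsum_add (F G : T -> R) : rsum (fun t => F t + G t) = rsum F + rsum G.
Proof. by rewrite /rsum big_split. Qed.

Lemma rsum_scal (c : R) (F : T -> R) : rsum (fun t => c * F t) = c * rsum F.
Proof. by rewrite /rsum big_distrr. Qed.

Lemma rsum_opp (F : T -> R) : rsum (fun t => - F t) = - rsum F.
Proof.
have -> : rsum (fun t => - F t) = rsum (fun t => (-1) * F t).
  by rewrite /rsum; apply: eq_bigr => *; ring.
rewrite rsum_scal; ring.
Qed.

Lemma rsum_sub (F G : T -> R) : rsum (fun t => F t - G t) = rsum F - rsum G.
Proof.
have -> : rsum (fun t => F t - G t) = rsum (fun t => F t + - G t) by [].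
by rewrite rsum_add rsum_opp.
Qed.

Lemma rsum_mulr (c : R) (F : T -> R) : rsum (fun t => F t * c) = rsum F * c.
Proof.
have -> : rsum (fun t => F t * c) = rsum (fun t => c * F t).
  by rewrite /rsum; apply: eq_bigr => *; ring.
by rewrite rsum_scal; ring.
Qed.

Lemma rsum0 (F : T -> R) : (forall t, F t = 0) -> rsum F = 0.
Proof. by move=> H; rewrite /rsum big1. Qed.

Lemma rsumPE (P : pred T) (F : T -> R) :
  rsumP P F = rsum (fun t => if P t then F t else 0).
Proof. by rewrite /rsumP /rsum big_mkcond. Qed.

Lemma rsum_ge_term (F : T -> R) t : (forall t, 0 <= F t) -> F t <= rsum F.
Proof.
move=> H; rewrite /rsum (bigD1 t) //=.
have : 0 <= \big[Rplus/R0]_(i | i != t) F i.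
  apply: (big_ind (fun x => 0 <= x)) => //; [lra | move=> *; lra].
lra.
Qed.
End Sums.

Section Ent.
Variables (Om : finType) (p : Om -> R).

Lemma entropy_sum (A : finType) (f : Om -> A) :
  entropy p f = - rsum (fun w => p w * log2 (dist_of p f (f w))).
Proof.
rewrite /entropy; congr Ropp.
rewrite /rsum (partition_big f xpredT) //=.
apply: eq_bigr => a _.
rewrite /dist_of /rsumP big_distrl /=.
by apply: eq_bigr => w /eqP ->.
Qed.

Lemma entropy_eq (A B : finType) (f1 : Om -> A) (f2 : Om -> B) :
  (forall w w', p w <> 0 -> p w' <> 0 -> (f1 w == f1 w') = (f2 w == f2 w')) ->
  entropy p f1 = entropy p f2.
Proof.
move=> H; rewrite !entropy_sum; congr Ropp; rewrite /rsum.
apply: eq_bigr => w _.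
have [->|pw] := Req_dec (p w) 0; first by ring.
congr (_ * log2 _); rewrite /dist_of !rsumPE; rewrite /rsum.
apply: eq_bigr => w' _.
have [->|pw'] := Req_dec (p w') 0; first by case: ifP; case: ifP.
by rewrite (H w' w).
Qed.
End Ent.
Section Ent2.
Variables (Om : finType) (p : Om -> R).
Hypothesis Hp : forall w, 0 <= p w.

Lemma dist_ge (A : finType) (f : Om -> A) w : p w <= dist_of p f (f w).
Proof.
rewrite /dist_of rsumPE.
have -> : p w = (fun w' => if f w' == f w then p w' else 0) w by rewrite eqxx.
apply: rsum_ge_term => t; case: ifP => _; [apply Hp | lra].
Qed.

Lemma class_le1 (K : finType) (g : Om -> K) (k : K) :
  rsum (fun w => if g w == k then p w * / dist_of p g (g w) else 0) <= 1.
Proof.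
have -> : rsum (fun w => if g w == k then p w * / dist_of p g (g w) else 0)
  = rsum (fun w => / dist_of p g k * (if g w == k then p w else 0)).
  rewrite /rsum; apply: eq_bigr => w _; case: eqP => [->|_]; ring.
rewrite rsum_scal -rsumPE -/(dist_of p g k).
have [->|nz] := Req_dec (dist_of p g k) 0; first by rewrite Rmult_0_r; lra.
rewrite Rinv_l //; lra.
Qed.

Lemma cond_ent_le (C : finType) (fb : Om -> bool) (fc : Om -> C) :
  entropy p (fun w => (fb w, fc w)) - entropy p fc <= rsum p.
Proof.
set g := fun w => (fb w, fc w).
set D1 := fun w => dist_of p g (g w).
set D2 := fun w => dist_of p fc (fc w).
have L2 : 0 < ln 2 by have := ln_lt_2; lra.
have D12 : forall w, D1 w <= D2 w.
  move=> w; rewrite /D1 /D2 /dist_of !rsumPE; apply: rsum_le => t.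
  rewrite /g xpair_eqE; case: (fb t == fb w); case: (fc t == fc w) => /=; solve [lra | apply Hp].
have step1 : forall w, p w * log2 (D2 w) - p w * log2 (D1 w) <=
    p w + (p w * (D2 w * / (2 * D1 w)) - p w) * / ln 2.
  move=> w; have [->|pw] := Req_dec (p w) 0; first by rewrite /Rdiv; lra.
  have pw' : 0 < p w by have := Hp w; lra.
  have a0 : 0 < D1 w by have := dist_ge g w; rewrite -/(D1 w); lra.
  set a := D1 w in a0 *; set b := D2 w.
  set r := b * / (2 * a).
  have r0 : 0 < r.
    rewrite /r; apply Rmult_lt_0_compat; [have := D12 w; rewrite -/a -/b; lra|].
    apply Rinv_0_lt_compat; lra.
  have hb : b = 2 * a * r by rewrite /r; field; lra.
  have lnr : ln r <= r - 1 by have := exp_ineq1_le (ln r); rewrite exp_ln //; lra.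
  clearbody r; rewrite /log2 hb !ln_mult; try lra.
  have -> : p w * ((ln 2 + ln a + ln r) / ln 2) - p w * (ln a / ln 2)
          = p w + (p w * ln r) * / ln 2 by field; apply Rgt_not_eq; lra.
  have : (p w * ln r) * / ln 2 <= (p w * r - p w) * / ln 2.
    apply Rmult_le_compat_r; [left; apply Rinv_0_lt_compat; lra | ].
    have : p w * ln r <= p w * (r - 1) by apply Rmult_le_compat_l; lra.
    lra.
  lra.
have step2 : rsum (fun w => p w * (D2 w * / (2 * D1 w))) <= rsum p.
  have -> : rsum (fun w => p w * (D2 w * / (2 * D1 w)))
       = / 2 * rsum (fun w => rsum (fun w' => (p w * / D1 w) * (if fc w' == fc w then p w' else 0))).
    rewrite -rsum_scal /rsum; apply: eq_bigr => w _.
    rewrite -[in RHS]big_distrr /= -/(rsum _) /D2 /dist_of rsumPE.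
    have [->|nz] := Req_dec (D1 w) 0.
      rewrite Rmult_0_r Rinv_0; ring.
    rewrite Rinv_mult; ring.
  rewrite /rsum exchange_big /= -!/(rsum _).
  have : rsum (fun w' => rsum (fun w => p w * / D1 w * (if fc w' == fc w then p w' else 0)))
      <= rsum (fun w' => p w' * 2).
    apply: rsum_le => w'.
    have -> : rsum (fun w => p w * / D1 w * (if fc w' == fc w then p w' else 0))
      = p w' * (rsum (fun w => if g w == (true, fc w') then p w * / D1 w else 0)
              + rsum (fun w => if g w == (false, fc w') then p w * / D1 w else 0)).
      rewrite -rsum_add -rsum_scal /rsum; apply: eq_bigr => w _.
      rewrite /g !xpair_eqE eq_sym; case: (fc w == fc w'); case: (fb w) => /=; ring.
    apply Rmult_le_compat_l; first by apply Hp.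
    have := class_le1 g (true, fc w'); have := class_le1 g (false, fc w').
    rewrite /D1 /= => h1 h2; apply: (Rle_trans _ (1 + 1)); [apply Rplus_le_compat; [exact h2 | exact h1] | lra].
  move=> H.
  have E2 : rsum (fun w' => p w' * 2) = 2 * rsum p.
    by rewrite -rsum_scal /rsum; apply: eq_bigr => *; ring.
  apply: (Rle_trans _ (/2 * (2 * rsum p))); last by lra.
  apply Rmult_le_compat_l; [lra | rewrite -E2; exact H].
rewrite !entropy_sum -/g.
have H : rsum (fun w => p w * log2 (D2 w) - p w * log2 (D1 w)) <=
  rsum (fun w => p w + (p w * (D2 w * / (2 * D1 w)) - p w) * / ln 2) by apply: rsum_le.
rewrite rsum_add rsum_mulr rsum_sub rsum_sub in H.
have : (rsum (fun w => p w * (D2 w * / (2 * D1 w))) - rsum p) * / ln 2 <= 0.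
  have : 0 < / ln 2 by apply Rinv_0_lt_compat.
  nra.
rewrite /D1 /D2 /= in H *.
lra.
Qed.
End Ent2.

Lemma cond_mi_red (Om : finType) (p : Om -> R) (A B C : finType)
  (fa : Om -> A) (fb : Om -> B) (fc : Om -> C) :
  (forall w w', p w <> 0 -> p w' <> 0 -> fa w = fa w' -> w = w') ->
  cond_mi p fa fb fc = entropy p (fun w => (fb w, fc w)) - entropy p fc.
Proof.
move=> H; rewrite /cond_mi.
have E : forall (D : finType) (f : Om -> D), entropy p (fun w => (fa w, f w)) = entropy p fa.
  move=> D f; apply: entropy_eq => w w' pw pw'.
  rewrite xpair_eqE; case: eqP => [/(H _ _ pw pw') -> | _] //=; by rewrite eqxx.
rewrite (E _ fc).
have -> : entropy p (fun w => (fa w, fb w, fc w)) = entropy p (fun w => (fa w, (fb w, fc w))).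
  apply: entropy_eq => w w' _ _; rewrite !xpair_eqE; by case: (fa w == fa w'); case: (fb w == fb w').
have := E _ (fun w => (fb w, fc w)); rewrite /= => ->; ring.
Qed.

Notation cnext := Defs.next.
Notation cprev := Defs.prev.
Lemma prev_next m (i : 'I_m) : cprev (cnext i) = i.
Proof.
apply: val_inj; rewrite /= modnDml.
have -> : (i + 1 + (m - 1) = i + m)%N.
  have := ord_pos i; move=> h; rewrite -addnA subnKC //.
by rewrite modnDr modn_small.
Qed.

Lemma next_inj m : injective (@cnext m).
Proof. exact: (can_inj (@prev_next m)). Qed.

Lemma next_neq m (i : 'I_m) : (2 <= m)%N -> cnext i != i.
Proof.
move=> hm; apply/eqP => /(congr1 val) /=.
have hi := ltn_ord i.
case: (ltngtP (i + 1) m) => h.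
- by rewrite modn_small // addn1 => /eqP; rewrite (gtn_eqF (ltnSn i)).
- by move: h; rewrite addn1 ltnNge hi.
- rewrite h modnn => h0; move: h; rewrite -h0 add0n => h1; by rewrite -h1 in hm.
Qed.

Definition Yof m (x : Xs m) : Ys m := [ffun i => (x (cprev i), x (cnext i))].
Definition Q0 m : Xs m -> unit * Us m bool -> R :=
  fun x vu => if vu.2 == x then 1 else 0.

Section Concrete.
Variables (m : nat) (P : Xs m * Ys m -> R).
Hypothesis HP : in_Pbar P.

Lemma P_ge0 xy : 0 <= P xy.
Proof. by case: HP => [[h _] _]. Qed.

Lemma Pbar_supp x y : P (x, y) <> 0 -> y = Yof x.
Proof.
move=> nz; apply/ffunP => i; rewrite ffunE.
case: (y i =P (x (cprev i), x (cnext i))) => // ne; exfalso.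
case: HP => _ /(_ i x (y i)); rewrite (introF eqP ne) rsumPE => h.
have := @rsum_ge_term _ (fun t : Xs m * Ys m => if (t.1 == x) && (t.2 i == y i) then P t else 0) (x, y).
rewrite /= !eqxx h => H.
have : P (x, y) <= 0 by apply: H => t; case: ifP => _; [apply P_ge0 | lra].
have := P_ge0 (x, y); lra.
Qed.

Definition jp := joint P (@Q0 m).

Lemma jp_ge0 w : 0 <= jp w.
Proof.
rewrite /jp /joint /Q0; case: ifP => _; have := P_ge0 w.1; nra.
Qed.

Lemma jp_supp w : jp w <> 0 -> w.1.2 = Yof w.1.1 /\ w.2.2 = w.1.1.
Proof.
rewrite /jp /joint /Q0 => nz; split.
  case: w nz => [[x y] vu] /= nz; apply: Pbar_supp => h; apply: nz; rewrite h; ring.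
by case: eqP nz => // _ nz; exfalso; apply: nz; ring.
Qed.

Lemma jp_inj w w' : jp w <> 0 -> jp w' <> 0 -> w.1.1 = w'.1.1 -> w = w'.
Proof.
move=> /jp_supp [h1 h2] /jp_supp [h1' h2'].
case: w h1 h2 => [[x y] [v u]]; case: w' h1' h2' => [[x' y'] [v' u']] /= -> -> -> -> ->.
by case: v; case: v'.
Qed.

Lemma Q0_sum x : rsum (@Q0 m x) = 1.
Proof.
rewrite /rsum /Q0 -(pair_big xpredT xpredT (fun v u => if u == x then 1 else 0)) /=.
rewrite (eq_bigr (fun _ => 1)).
  by rewrite big_const /= cardT /= enumT unlock /=; ring.
move=> v _; rewrite -big_mkcond /=.
by rewrite (big_pred1_eq Rplus x (fun _ => 1)).
Qed.

Lemma jp_sum : rsum jp = 1.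
Proof.
rewrite /rsum /jp /joint -(pair_big xpredT xpredT (fun a b => P a * Q0 a.1 b)) /=.
case: HP => [[_ h] _]; rewrite -h /rsum; apply: eq_bigr => a _.
by rewrite -big_distrr /= -/(rsum _) Q0_sum Rmult_1_r.
Qed.
End Concrete.

Definition adj m (a b : 'I_m) := (b == cprev a) || (b == cnext a).
Definition Iset m (s : {perm 'I_m}) : {set 'I_m} :=
  [set k : 'I_m | [forall j : 'I_m, (j < k)%N ==> ~~ adj (s j) (s k)]].

Section Terms.
Variables (m : nat) (P : Xs m * Ys m -> R).
Hypothesis HP : in_Pbar P.
Variable s : {perm 'I_m}.

Lemma term_le1 (k : 'I_m) : Rlb_term P (@Q0 m) s k <= 1.
Proof.
rewrite /Rlb_term /=; case: ifP => _.
- rewrite cond_mi_red; last exact: jp_inj HP.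
  have -> : entropy (joint P (@Q0 m))
      (fun w : Omega m unit bool => (w.2.1, w.2.2 (s k), w.1.2 (s k)))
    = entropy (joint P (@Q0 m)) (fun w : Omega m unit bool => (w.2.2 (s k), w.1.2 (s k))).
    apply: entropy_eq => w w' _ _; rewrite !xpair_eqE; by case: w.2.1; case: w'.2.1.
  rewrite -(jp_sum HP); apply: cond_ent_le; exact: jp_ge0.
- rewrite cond_mi_red; last exact: jp_inj HP.
  rewrite -(jp_sum HP); apply: cond_ent_le; exact: jp_ge0.
Qed.

Lemma term_le0 (k : 'I_m) : k \notin Iset s -> Rlb_term P (@Q0 m) s k <= 0.
Proof.
rewrite inE negb_forall => /existsP [j]; rewrite negb_imply negbK => /andP [jk ad].
rewrite /Rlb_term /=.
case: ifP => [/eqP k0|_]; first by rewrite k0 in jk.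
rewrite cond_mi_red; last exact: jp_inj HP.
set fc := (fun w : Omega m unit bool => _).
rewrite (_ : entropy _ _ = entropy (joint P (@Q0 m)) fc); first lra.
apply: entropy_eq => w w' pw pw'.
rewrite xpair_eqE; case E: (fc w == fc w'); rewrite ?andbF ?andbT //.
have := f_equal (fun c : unit * Us m (option bool) * Us m (option (bool * bool)) => c.2 j) (eqP E); rewrite /fc /= !ffunE (ltnW jk) => -[].
case/(jp_supp HP): pw => -> ->; case/(jp_supp HP): pw' => -> ->.
rewrite !ffunE => -[h1 h2]; apply/eqP.
by case/orP: ad => /eqP ->.
Qed.
End Terms.

Lemma Iset_card m (s : {perm 'I_m}) : (2 <= m)%N -> (2 * #|Iset s| <= m)%N.
Proof.
move=> hm.
set I := Iset s.
pose f k := (s^-1)%g (cnext (s k)).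
have sfk : forall k, s (f k) = cnext (s k) by move=> k; rewrite /f permKV.
have finj : injective f.
  by move=> a b /(congr1 s); rewrite !sfk => /next_inj /perm_inj.
have sub : f @: I \subset ~: I.
  apply/subsetP => y /imsetP [k kI ->]; rewrite inE.
  rewrite /I /Iset inE in kI *.
  case: (ltngtP (f k) k) => h.
  - move/forallP: kI => /(_ (f k)); rewrite h /= /adj sfk prev_next eqxx //.
  - rewrite inE negb_forall; apply/existsP; exists k; rewrite h /= /adj sfk eqxx orbT //.
  - have : s (f k) = s k by congr (s _); apply: val_inj.
    by rewrite sfk => /eqP; rewrite (negbTE (next_neq _ hm)).
have := subset_leq_card sub; rewrite card_imset //.
have := cardsC I; rewrite card_ord => h1 h2.
rewrite mulSn mul1n; apply: (leq_trans (leq_add (leqnn _) h2)); rewrite h1 //.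
Qed.

Lemma rsum_ind (T : finType) (A : {set T}) :
  rsum (fun k => if k \in A then 1 else 0) = INR #|A|.
Proof.
rewrite -sum1_card (big_morph INR plus_INR (erefl (INR 0))) big_mkcond /rsum.
by apply: eq_bigr => k _; case: (k \in A).
Qed.

Theorem lemma3 (m : nat) (Hm : (5 <= m)%N) (Hodd : odd m) :
  exists c : R, (c < INR m / 2) /\
  exists eps0 : R, (0 < eps0) /\
  forall eps : R, (0 < eps < eps0) -> Rlb_le m eps c.
Proof.
have m1 : 1 <= INR m by apply: (le_INR 1); apply/leP; apply: leq_trans Hm.
exists ((INR m - 1) / 2); split; first lra.
exists 1; split; first lra.
move=> eps [e0 e1] P HP eta heta.
exists unit, bool, (@Q0 m), (fun _ _ u _ => u); split.
  split.
    move=> x; split; [move=> t; rewrite /Q0; case: ifP => _; lra | exact: Q0_sum].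
  move=> i; rewrite rsum0; first lra.
  move=> w; have [->|nz] := Req_dec (joint P (@Q0 m) w) 0; first ring.
  by case/(jp_supp HP): nz => _ ->; rewrite eqxx /=; ring.
apply: (Rle_trans _ ((INR m - 1) / 2 - eps)); last lra.
apply: Rplus_le_compat_r.
rewrite /Rbar_lb; apply: (big_ind (fun x => x <= (INR m - 1) / 2)).
- lra.
- by move=> x y hx hy; apply: Rmax_lub.
move=> s _.
apply: (Rle_trans _ (rsum (fun k => if k \in Iset s then 1 else 0))).
  apply: rsum_le => k; case: ifP => h.
    exact: term_le1.
  by apply: term_le0 => //; rewrite h.
rewrite rsum_ind.
have hn : (2 * #|Iset s| + 1 <= m)%N.
  have := Iset_card s (leq_trans (isT : (2 <= 5)%N) Hm).
  rewrite leq_eqVlt => /orP [/eqP h|h]; last by rewrite addn1.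
  have : odd (2 * #|Iset s|) by rewrite h.
  by rewrite oddM.
have := le_INR _ _ (elimT leP hn); rewrite plus_INR mult_INR /=; lra.
Qed.
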